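(* Let $m$ be odd, $q=2^m$, $R=GR(4,m)$ with Teichmüller set $\mathcal{T}$, let $A,B\in\mathcal{T}$ with $B\neq0$, and let $d\in\mathbb{F}_q$. The number of triples $(X,Y,Z)\in\mathcal{T}^3$ satisfying $$X+Y+Z=-A+2B,\qquad x^3+y^3+z^3=a^3+b^3d$$ is $3$ if $d=0$, is $0$ if $d\in M_0\cup M_1$, and is $6$ if $d\in M_3$.
   Context: $R=GR(4,m)=\mathbb{Z}_4[x]/(f(x))$ with $f$ monic of degree $m$ irreducible mod 2; $\mathcal{T}=\{0,1,\beta,\dots,\beta^{q-2}\}$ with $\beta\in R^*$ of order $q-1$; lower-case letters $x,y,z,a,b$ denote reductions mod 2 (in $\mathbb{F}_q$) of $X,Y,Z,A,B$. For $c\in\mathbb{F}_q$ let $f_c(x)=x^3+x+c$, and for $i\in\{0,1,3\}$ let $M_i=\{c\in\mathbb{F}_q^*: f_c(x)=0 \text{ has exactly } i \text{ solutions in } \mathbb{F}_q\}$. *)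

(* Defs.v *)
From HB Require Import structures.
From mathcomp Require Import all_boot all_order all_algebra.
Set Implicit Arguments. Unset Strict Implicit. Unset Printing Implicit Defensive.
Import Order.TTheory GRing.Theory Num.Theory.
Local Open Scope ring_scope.

Definition z4_to_f2 (c : 'Z_4) : 'F_2 := (nat_of_ord c)%:R.

Definition fc (F : fieldType) (c x : F) : F := x ^+ 3 + x + c.

Definition Mset (F : finFieldType) (i : nat) : {set F} :=
  [set c : F | (c != 0) && (#|[set x : F | fc c x == 0]| == i)].

Definition teich (R : nzRingType) (q : nat) (beta : R) : {pred R} :=
  fun X => (X == 0) || [exists i : 'I_q.-1, X == beta ^+ i].

(* Main.v *)
Require Import Defs.
From HB Require Import structures.
From mathcomp Require Import all_boot all_order all_algebra.
From mathcomp Require Import ring.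
Import Order.TTheory GRing.Theory Num.Theory.
Local Open Scope ring_scope.

Set Implicit Arguments.
Unset Strict Implicit.


Lemma z4_all (P : 'Z_4 -> Prop) : P 0 -> P 1 -> P 2%:R -> P 3%:R -> forall c, P c.
Proof.
move=> h0 h1 h2 h3 [[|[|[|[|//]]]] Hc].
- by have -> : Ordinal Hc = 0 by apply/val_inj.
- by have -> : Ordinal Hc = 1 by apply/val_inj.
- by have -> : Ordinal Hc = 2%:R by apply/val_inj.
- by have -> : Ordinal Hc = 3%:R by apply/val_inj.
Qed.

Lemma z4_add : zmod_morphism z4_to_f2.
Proof. move=> x y; apply/eqP; move: x y; apply: z4_all; apply: z4_all; by []. Qed.
Lemma z4_mul : monoid_morphism z4_to_f2.
Proof.
split; first by [].
move=> x y; apply/eqP; move: x y; apply: z4_all; apply: z4_all; by [].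
Qed.
HB.instance Definition _ := GRing.isZmodMorphism.Build 'Z_4 'F_2 z4_to_f2 z4_add.
HB.instance Definition _ := GRing.isMonoidMorphism.Build 'Z_4 'F_2 z4_to_f2 z4_mul.

Definition half4 (c : 'Z_4) : 'Z_4 :=
  if c == 2%:R then 1 else if c == 3%:R then 1 else 0.
Lemma half4_spec (c : 'Z_4) : z4_to_f2 c = 0 -> c = half4 c *+ 2.
Proof. move=> /eqP H; apply/eqP; move: H; apply/implyP; move: c; apply: z4_all; by []. Qed.
Lemma z4_two (c : 'Z_4) : c *+ 2 = 0 -> z4_to_f2 c = 0.
Proof. move=> /eqP H; apply/eqP; move: H; apply/implyP; move: c; apply: z4_all; by []. Qed.
Lemma half4_0 : half4 0 = 0. Proof. by []. Qed.
Lemma four_Z4 : (4%:R : 'Z_4) = 0. Proof. by apply/eqP. Qed.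
Lemma two_F2 : (2%:R : 'F_2) = 0. Proof. by apply/eqP. Qed.

Lemma poly_even (r : {poly 'Z_4}) :
  map_poly z4_to_f2 r = 0 -> r = (map_poly half4 r) *+ 2.
Proof.
move=> H; apply/polyP => i; rewrite coefMn coef_map_id0 //.
apply: half4_spec; have := congr1 (fun p : {poly 'F_2} => p`_i) H.
by rewrite coef_map coef0.
Qed.

Section Char2.
Variable F : fieldType.
Hypothesis two : (2%:R : F) = 0.

Lemma mulrn2 (J : F) : J *+ 2 = 0.
Proof. by rewrite -mulr_natr two mulr0. Qed.
Lemma c2E (x y J : F) : x = y + J *+ 2 -> x = y.
Proof. by rewrite mulrn2 addr0. Qed.
Lemma c2_opp (x : F) : - x = x.
Proof. by apply: (c2E (J := - x)); ring. Qed.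
Lemma c2_add0 (x y : F) : x + y = 0 -> x = y.
Proof. by move=> /eqP; rewrite addr_eq0 c2_opp => /eqP. Qed.
Lemma c2_sqD (x y : F) : (x + y) ^+ 2 = x ^+ 2 + y ^+ 2.
Proof. by apply: (c2E (J := x * y)); ring. Qed.
Lemma c2_sq_inj (x y : F) : x ^+ 2 = y ^+ 2 -> x = y.
Proof.
move=> H; apply: c2_add0.
have : (x + y) ^+ 2 = 0 by rewrite c2_sqD H; exact: mulrn2.
by move/eqP; rewrite expf_eq0 /= => /eqP.
Qed.
Lemma c2_sq_eq (x y : F) : (x ^+ 2 == y ^+ 2) = (x == y).
Proof. by apply/eqP/eqP => [/c2_sq_inj|->]. Qed.
Lemma c2_cond (x y z a1 b : F) :
  ((x + y + z == a1) && (x * y + y * z + z * x == a1 ^+ 2 + b)) =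
  ((x ^+ 2 + y ^+ 2 + z ^+ 2 == a1 ^+ 2) &&
   (x ^+ 2 * y ^+ 2 + y ^+ 2 * z ^+ 2 + z ^+ 2 * x ^+ 2 == (a1 ^+ 2) ^+ 2 + b ^+ 2)).
Proof.
congr andb; first by rewrite -c2_sq_eq !c2_sqD.
by rewrite -c2_sq_eq !c2_sqD !exprMn.
Qed.
End Char2.

Section R4.
Variables (R : comNzRingType) (F : fieldType) (red : {rmorphism R -> F}).
Hypothesis red_ker : forall X, red X = 0 <-> exists Y, X = Y *+ 2.
Hypothesis four : (4%:R : R) = 0.
Hypothesis inj2 : forall W : R, W *+ 2 = 0 -> red W = 0.

Lemma m4 (J : R) : J *+ 4 = 0.
Proof. by rewrite -mulr_natr four mulr0. Qed.
Lemma c4E (x y J : R) : x = y + J *+ 4 -> x = y.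
Proof. by rewrite m4 addr0. Qed.

Lemma two_F : (2%:R : F) = 0.
Proof. by rewrite -(rmorph_nat red); apply/red_ker; exists 1. Qed.

Lemma sq_red (X Y : R) : red X = red Y -> X ^+ 2 = Y ^+ 2.
Proof.
move=> H; have : red (X - Y) = 0 by rewrite rmorphB H subrr.
move/red_ker => [Z HZ]; have -> : X = Y + Z *+ 2 by rewrite -HZ addrC subrK.
by apply: (c4E (J := Y * Z + Z ^+ 2)); ring.
Qed.

Lemma two_red (X : R) : red X = 0 -> X *+ 2 = 0.
Proof. by move/red_ker => [Z ->]; rewrite -mulrnA m4. Qed.

Lemma eq_sum (X1 Y1 Z1 A1 B : R) :
  (X1 ^+ 2 + Y1 ^+ 2 + Z1 ^+ 2 == - A1 ^+ 2 + B *+ 2) =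
  (red X1 + red Y1 + red Z1 == red A1) &&
  (red X1 * red Y1 + red Y1 * red Z1 + red Z1 * red X1 == red A1 ^+ 2 + red B).
Proof.
have two := two_F.
set E := X1 * Y1 + Y1 * Z1 + Z1 * X1.
set x := red X1; set y := red Y1; set z := red Z1; set a := red A1; set b := red B.
apply/eqP/andP => [H|[/eqP H1 /eqP H2]].
- have Hr : x ^+ 2 + y ^+ 2 + z ^+ 2 = - a ^+ 2 + b *+ 2.
    by have := congr1 red H; rewrite !rmorphD !rmorphN !rmorphXn mulr2n.
  have H1 : x + y + z = a.
    apply: (c2_sq_inj two).
    have -> : (x + y + z) ^+ 2 = x ^+ 2 + y ^+ 2 + z ^+ 2 + (x * y + y * z + z * x) *+ 2 by ring.
    rewrite Hr; apply: (c2E two (J := b + (x * y + y * z + z * x) - a ^+ 2)); ring.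
  split; first by apply/eqP.
  have HP : (X1 + Y1 + Z1) ^+ 2 = A1 ^+ 2 by apply: sq_red; rewrite !rmorphD.
  have K : (E + B + A1 ^+ 2) *+ 2 = 0.
    have -> : (E + B + A1 ^+ 2) *+ 2 =
      (X1 + Y1 + Z1) ^+ 2 - (X1 ^+ 2 + Y1 ^+ 2 + Z1 ^+ 2) + B *+ 2 + A1 ^+ 2 *+ 2 by rewrite /E; ring.
    rewrite HP H; apply: (c4E (J := A1 ^+ 2)); ring.
  have := inj2 K; rewrite !rmorphD rmorphXn !rmorphM -/x -/y -/z -/a -/b => /(c2_add0 two) He.
  apply/eqP; rewrite -He; apply: (c2E two (J := - b)); ring.
- have HP : (X1 + Y1 + Z1) ^+ 2 = A1 ^+ 2 by apply: sq_red; rewrite !rmorphD -/x -/y -/z H1.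
  have K : (E + B + A1 ^+ 2) *+ 2 = 0.
    apply: two_red; rewrite !rmorphD rmorphXn !rmorphM -/x -/y -/z -/a -/b H2.
    have -> : a ^+ 2 + b + b + a ^+ 2 = (a ^+ 2 + b) *+ 2 by ring.
    exact: mulrn2.
  have -> : X1 ^+ 2 + Y1 ^+ 2 + Z1 ^+ 2 =
     (X1 + Y1 + Z1) ^+ 2 - (E + B + A1 ^+ 2) *+ 2 + B *+ 2 + A1 ^+ 2 *+ 2 by rewrite /E; ring.
  rewrite HP K; apply: (c4E (J := A1 ^+ 2)); ring.
Qed.
End R4.

Section Count.
Variable F : finFieldType.
Hypothesis two : (2%:R : F) = 0.

Definition Up (d : F) : {set F * F} :=
  [set p | (p.1 ^+ 3 + p.1 + d == 0) && (p.2 ^+ 2 + p.1 * p.2 + p.1 ^+ 2 + 1 == 0)].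

Definition Sol (a b d : F) : {set F * F * F} :=
  [set s | [&& s.1.1 + s.1.2 + s.2 == a,
              s.1.1 * s.1.2 + s.1.2 * s.2 + s.2 * s.1.1 == a ^+ 2 + b ^+ 2 &
              s.1.1 ^+ 3 + s.1.2 ^+ 3 + s.2 ^+ 3 == a ^+ 3 + b ^+ 3 * d]].

Lemma sol_count (a b d : F) : b != 0 -> #|Sol a b d| = #|Up d|.
Proof.
move=> hb.
pose psi (p : F * F) := (a + b * p.1, a + b * p.2, a + b * (p.1 + p.2)).
have psi_inj : injective psi.
  move=> [u v] [u' v'] /= [/addrI/(mulfI hb) -> /addrI/(mulfI hb) ->] _ //.
rewrite -(card_imset (Up d) psi_inj); congr #|pred_of_set _|.
apply/setP => -[[x y] z]; rewrite !inE /=; apply/idP/imsetP.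
- case/and3P => /eqP hs /eqP he /eqP hc.
  pose u := (x - a) / b; pose v := (y - a) / b.
  have hx : x = a + b * u by rewrite /u mulrC divfK // addrC subrK.
  have hy : y = a + b * v by rewrite /v mulrC divfK // addrC subrK.
  have hz : z = a + b * (u + v).
    have -> : z = (x + y + z) - x - y by ring.
    rewrite hs {1}hx {1}hy; apply: (c2E two (J := - a - b * (u + v))); ring.
  set Q := v ^+ 2 + u * v + u ^+ 2 + 1.
  set T := u * v * (u + v) + d.
  have hQ : Q = 0.
    move: he; rewrite hx hy hz.
    have -> : (a + b * u) * (a + b * v) + (a + b * v) * (a + b * (u + v)) +
              (a + b * (u + v)) * (a + b * u) =
              a ^+ 2 + b ^+ 2 + b ^+ 2 * Q +
              (2%:R * a * b * u + 2%:R * a * b * v + a^+2 - b^+2 + b^+2 * u * v) *+ 2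
      by rewrite /Q; ring.
    rewrite mulrn2 // addr0 -{2}[a ^+ 2 + b ^+ 2]addr0 => /addrI/eqP.
    by rewrite mulf_eq0 expf_eq0 /= (negbTE hb) /= => /eqP.
  have hT : T = 0.
    move: hc; rewrite hx hy hz.
    have -> : (a + b * u) ^+ 3 + (a + b * v) ^+ 3 + (a + b * (u + v)) ^+ 3 =
              a ^+ 3 + b ^+ 3 * d + b ^+ 3 * T +
              (3%:R * a * b^+2 * u * v + 3%:R * a * b^+2 * u^+2 + 3%:R * a * b^+2 * v^+2 + 3%:R * a^+2 * b * u + 3%:R * a^+2 * b * v + a^+3 - b^+3 * d + b^+3 * u * v^+2 + b^+3 * u^+2 * v + b^+3 * u^+3 + b^+3 * v^+3) *+ 2
      by rewrite /T; ring.
    rewrite mulrn2 // addr0 -{2}[a ^+ 3 + b ^+ 3 * d]addr0 => /addrI/eqP.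
    by rewrite mulf_eq0 expf_eq0 /= (negbTE hb) /= => /eqP.
  exists (u, v); last by rewrite /psi /= -hx -hy -hz.
  rewrite inE /= -/Q hQ eqxx andbT.
  have -> : u ^+ 3 + u + d = T + u * Q + (- u * v^+2 - u^+2 * v) *+ 2 by rewrite /T /Q; ring.
  by rewrite hT hQ mulr0 mulrn2 // !addr0.
- case=> -[u v]; rewrite inE /= => /andP [/eqP hg /eqP hQ] [-> -> ->].
  set Q := v ^+ 2 + u * v + u ^+ 2 + 1 in hQ.
  have hT : u * v * (u + v) + d = 0.
    have -> : u * v * (u + v) + d = (u ^+ 3 + u + d) + u * Q + (- u - u^+3) *+ 2 by rewrite /Q; ring.
    by rewrite hg hQ mulr0 mulrn2 // !addr0.
  apply/and3P; split; apply/eqP.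
  + by apply: (c2E two (J := a + b * (u + v))); ring.
  + have -> : (a + b * u) * (a + b * v) + (a + b * v) * (a + b * (u + v)) +
              (a + b * (u + v)) * (a + b * u) =
              a ^+ 2 + b ^+ 2 + b ^+ 2 * Q +
              (2%:R * a * b * u + 2%:R * a * b * v + a^+2 - b^+2 + b^+2 * u * v) *+ 2
      by rewrite /Q; ring.
    by rewrite hQ mulr0 mulrn2 // !addr0.
  + have -> : (a + b * u) ^+ 3 + (a + b * v) ^+ 3 + (a + b * (u + v)) ^+ 3 =
              a ^+ 3 + b ^+ 3 * d + b ^+ 3 * (u * v * (u + v) + d) +
              (3%:R * a * b^+2 * u * v + 3%:R * a * b^+2 * u^+2 + 3%:R * a * b^+2 * v^+2 + 3%:R * a^+2 * b * u + 3%:R * a^+2 * b * v + a^+3 - b^+3 * d + b^+3 * u * v^+2 + b^+3 * u^+2 * v + b^+3 * u^+3 + b^+3 * v^+3) *+ 2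
      by ring.
    by rewrite hT mulr0 mulrn2 // !addr0.
Qed.
End Count.

Section Count2.
Variable F : finFieldType.
Hypothesis two : (2%:R : F) = 0.

Lemma c2_add0E (x y : F) : (x + y == 0) = (x == y).
Proof.
apply/eqP/eqP => [/(c2_add0 two)//|->].
by rewrite -mulr2n mulrn2.
Qed.

Lemma up0 : #|Up (0 : F)| = 3%N.
Proof.
have -> : Up (0 : F) = [set ((0 : F), (1 : F)); (1, 0); (1, 1)].
  apply/setP => -[u v]; rewrite !inE /= !xpair_eqE addr0.
  have -> : u ^+ 3 + u = u * (u + 1) ^+ 2 + (- u ^+ 2) *+ 2 by ring.
  rewrite mulrn2 // addr0 mulf_eq0 expf_eq0 /= c2_add0E.
  have [->|Hu0] := eqVneq u 0; rewrite ?eqxx /=.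
    have -> : v ^+ 2 + 0 * v + 0 ^+ 2 + 1 = (v + 1) ^+ 2 + (- v) *+ 2 by ring.
    rewrite mulrn2 // addr0 expf_eq0 /= c2_add0E (eq_sym (0:F) 1) (negbTE (oner_neq0 F)).
    by case: (v == 1).

  have [->|Hu1] := eqVneq u 1; rewrite ?eqxx /=; last by [].
  have -> : v ^+ 2 + 1 * v + 1 ^+ 2 + 1 = v * (v + 1) + 1 *+ 2 by ring.
  by rewrite mulrn2 // addr0 mulf_eq0 c2_add0E.
rewrite -setUA cardsU1 cards2 !inE !xpair_eqE eqxx (negbTE (oner_neq0 F)) (eq_sym (0:F) 1) (negbTE (oner_neq0 F)).
by [].
Qed.

Lemma upN (d : F) : d != 0 ->
  #|Up d| = (#|[set x : F | fc d x == 0%R]| * #|[set x : F | fc d x == 0%R]|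
             - #|[set x : F | fc d x == 0%R]|)%N.
Proof.
move=> hd; set Rt := [set x : F | fc d x == 0].
pose D := [set (x, x) | x in Rt].
have hD : #|D| = #|Rt| by apply: card_imset => x y [].
have sD : D \subset setX Rt Rt by apply/subsetP => p /imsetP [x hx ->]; rewrite inE /= hx.
rewrite -cardsX -hD.
have -> : Up d = setX Rt Rt :\: D.
  apply/setP => -[u v]; rewrite !inE /fc /=.
  have hDm : ((u, v) \in D) = (u == v) && (v ^+ 3 + v + d == 0).
    apply/imsetP/andP => [[x hx [-> ->]]|[/eqP -> hv]]; first by move: hx; rewrite inE /fc => ->.
    by exists v; rewrite // inE.
  rewrite hDm.
  set Q := v ^+ 2 + u * v + u ^+ 2 + 1.
  have hgv : v ^+ 3 + v + d = (v + u) * Q + (u ^+ 3 + u + d) + (- u - u * v^+2 - u^+2 * v - u^+3) *+ 2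
    by rewrite /Q; ring.
  rewrite hgv mulrn2 // addr0.
  have [hgu|hgu] := eqVneq (u ^+ 3 + u + d) 0; rewrite ?hgu ?addr0 ?andbF ?andbT //=.
  have [huv|huv] := eqVneq u v; rewrite /=.
    have -> : Q = (u + 1) ^+ 2 + (- u + u^+2) *+ 2 by rewrite /Q -huv; ring.
    rewrite mulrn2 // addr0 expf_eq0 /= c2_add0E.
    rewrite andNb; apply/negbTE; apply: contra hd => /eqP hu1; move: hgu; rewrite hu1.
    have -> : 1 ^+ 3 + 1 + d = d + 1 *+ 2 by ring.
    by rewrite mulrn2 // addr0 => ->.
  rewrite mulf_eq0 (c2_add0E v u) (eq_sym v u) (negbTE huv) /=.
  by [].
rewrite cardsD; congr (_ - _)%N.
by rewrite (setIidPr sD).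
Qed.
End Count2.

Lemma inj2_lemma (f : {poly 'Z_4})
  (hfirr : irreducible_poly (map_poly z4_to_f2 f))
  (R : comNzRingType) (phi : {rmorphism {poly 'Z_4} -> R})
  (phi_surj : forall X : R, exists p, phi p = X)
  (phi_ker : forall p, phi p = 0 <-> exists g, p = g * f)
  (F : fieldType) (red : {rmorphism R -> F})
  (red_ker : forall X, red X = 0 <-> exists Y, X = Y *+ 2) :
  forall W : R, W *+ 2 = 0 -> red W = 0.
Proof.
move=> W HW; apply/red_ker.
have [p Hp] := phi_surj W; subst W.
have phif : phi f = 0 by apply/phi_ker; exists 1; rewrite mul1r.
have : phi (p *+ 2) = 0 by rewrite rmorphMn.
move/phi_ker => [g Hg].
have fn0 : map_poly z4_to_f2 f != 0.
  by case: hfirr => /ltnW; rewrite lt0n size_poly_eq0.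
have mg0 : map_poly z4_to_f2 g = 0.
  have : map_poly z4_to_f2 g * map_poly z4_to_f2 f = 0.
    rewrite -rmorphM -Hg rmorphMn; apply/polyP => i.
    by rewrite coefMn coef0 -mulr_natr two_F2 mulr0.
  by move/eqP; rewrite mulf_eq0 (negbTE fn0) orbF => /eqP.
set g' := map_poly half4 g.
have Hg' : g = g' *+ 2 by apply: poly_even.
set r := p - g' * f.
have r2 : r *+ 2 = 0.
  rewrite /r mulrnBl; apply/eqP; rewrite subr_eq0; apply/eqP; apply: (etrans Hg).
  by rewrite {1}Hg' mulrnAl.
have hr : map_poly z4_to_f2 r = 0.
  apply/polyP => i; rewrite coef_map coef0; apply: z4_two.
  by rewrite -coefMn r2 coef0.
exists (phi (map_poly half4 r)).
by rewrite -rmorphMn -poly_even // /r rmorphB rmorphM phif mulr0 subr0.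
Qed.

Lemma card_F_le (m : nat) (f : {poly 'Z_4}) (hfmonic : f \is monic)
  (hfsize : size f = m.+1)
  (R : comNzRingType) (phi : {rmorphism {poly 'Z_4} -> R})
  (phi_surj : forall X : R, exists p, phi p = X)
  (phi_ker : forall p, phi p = 0 <-> exists g, p = g * f)
  (F : finFieldType) (red : {rmorphism R -> F})
  (red_surj : forall x : F, exists X, red X = x)
  (red_ker : forall X, red X = 0 <-> exists Y, X = Y *+ 2) :
  (#|F| <= 2 ^ m)%N.
Proof.
have phif : phi f = 0 by apply/phi_ker; exists 1; rewrite mul1r.
have two := two_F red_ker.
set xi := red (phi 'X).
pose Phi (b : {ffun 'I_m -> bool}) : F := \sum_(i < m) (b i)%:R * xi ^+ i.
suff : [set: F] \subset [set Phi b | b in [set: {ffun 'I_m -> bool}]].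
  move/subset_leq_card; rewrite cardsT => H; apply: leq_trans H _.
  apply: leq_trans (leq_imset_card _ _) _.
  by rewrite cardsT card_ffun card_bool card_ord.
apply/subsetP => x _; have [X <-] := red_surj x; have [p <-] := phi_surj X.
set r := Pdiv.CommonRing.rmodp p f.
have hp : phi p = phi r.
  by rewrite {1}(Pdiv.RingMonic.rdivp_eq hfmonic p) rmorphD rmorphM phif mulr0 add0r.
have hsr : (size r <= m)%N.
  have := Pdiv.CommonRing.ltn_rmodpN0 p (monic_neq0 hfmonic).
  by rewrite hfsize.
have hr : r = \poly_(i < m) r`_i.
  apply/polyP => i; rewrite coef_poly; case: ltnP => // hi.
  by rewrite nth_default // (leq_trans hsr hi).
apply/imsetP; exists [ffun i : 'I_m => odd (nat_of_ord (r`_i)%R)]; first by rewrite inE.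
rewrite hp [in LHS]hr poly_def !rmorph_sum /Phi; apply: eq_bigr => i _; rewrite ffunE.
rewrite -mul_polyC !rmorphM !rmorphXn -/xi; congr (_ * _).
have -> : (r`_i)%:P = ((nat_of_ord (r`_i)%R)%:R : 'Z_4)%:P by rewrite natr_Zp.
rewrite polyC_natr !rmorph_nat.
set n := nat_of_ord _.
by rewrite -{1}(odd_double_half n) natrD -muln2 natrM two mulr0 addr0. 
Qed.

Section Teich.
Variables (m : nat) (R : comNzRingType) (F : finFieldType) (red : {rmorphism R -> F}).
Hypothesis hm0 : (0 < m)%N.
Hypothesis red_ker : forall X, red X = 0 <-> exists Y, X = Y *+ 2.
Hypothesis four : (4%:R : R) = 0.
Variable beta : R.
Hypothesis hbeta : (2 ^ m).-1.-primitive_root beta.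

Lemma teichP (X : R) :
  (X \in teich (2 ^ m) beta) = (X == 0) || [exists i : 'I_(2 ^ m).-1, X == beta ^+ i].
Proof. by []. Qed.

Lemma q_gt0 : (0 < 2 ^ m)%N. Proof. by rewrite expn_gt0. Qed.
Lemma n_gt0 : (0 < (2 ^ m).-1)%N.
Proof.
have : (2 ^ 1 <= 2 ^ m)%N by apply: leq_pexp2l.
by move: (2 ^ m)%N => k; case: k => [|[|k]].
Qed.
Lemma n_odd : odd (2 ^ m).-1.
Proof.
have := prednK q_gt0; move: (oddX 2 m); case: (2 ^ m)%N => [|k] //=.
by rewrite (negbTE (lt0n_neq0 hm0)) /= => /negbFE.
Qed.

Lemma rho_prim : (2 ^ m).-1.-primitive_root (red beta).
Proof.
have hn := n_gt0.
have [k pk kdn] := prim_order_exists hn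
  (etrans (esym (rmorphXn red _ beta)) (etrans (congr1 red (prim_expr_order hbeta)) (rmorph1 red))).
have : red (beta ^+ k) = red 1 by rewrite rmorphXn rmorph1 (prim_expr_order pk).
move/(sq_red red_ker four); rewrite -exprM expr1n => /eqP.
rewrite -(prim_order_dvd hbeta) Gauss_dvdl ?coprimen2 ?n_odd // => ndk.
have -> : (2 ^ m).-1 = k by apply/eqP; rewrite eqn_dvd ndk kdn.
exact: pk.
Qed.

Lemma rho_neq0 : red beta != 0.
Proof.
apply/eqP => h; have := prim_expr_order rho_prim; rewrite h expr0n.
by rewrite (negbTE (lt0n_neq0 n_gt0)) => /eqP; rewrite eq_sym oner_eq0.
Qed.

Lemma teich_red_neq0 (X : R) : X \in teich (2 ^ m) beta -> X != 0 -> red X != 0.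
Proof.
rewrite teichP => /orP [/eqP ->|/existsP [i /eqP ->]]; first by rewrite eqxx.
by rewrite rmorphXn expf_neq0 // rho_neq0.
Qed.

Lemma teich_pow (X : R) : X \in teich (2 ^ m) beta -> X ^+ (2 ^ m) = X.
Proof.
rewrite teichP => /orP [/eqP ->|/existsP [i /eqP ->]].
  by rewrite expr0n (negbTE (lt0n_neq0 q_gt0)).
have hb1 : beta ^+ (2 ^ m) = beta.
  by rewrite -(prednK q_gt0) exprSr (prim_expr_order hbeta) mul1r.
by rewrite -exprM mulnC exprM hb1.
Qed.

Lemma teich_sqrt (X : R) : X \in teich (2 ^ m) beta -> (X ^+ (2 ^ m.-1)) ^+ 2 = X.
Proof.
move=> hX; rewrite -exprM muln2 -mul2n -expnS prednK //; exact: teich_pow.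
Qed.

Lemma teich_inj (X Y : R) : X \in teich (2 ^ m) beta -> Y \in teich (2 ^ m) beta ->
  red X = red Y -> X = Y.
Proof.
move=> hX hY; have [->|nX] := eqVneq X 0.
  by rewrite rmorph0 => /esym /eqP; have [->|/(teich_red_neq0 hY)/negbTE ->] := eqVneq Y 0.
have [->|nY] := eqVneq Y 0.
  by rewrite rmorph0 => /eqP; rewrite (negbTE (teich_red_neq0 hX nX)).
move: hX hY nX nY; rewrite !teichP => /orP [/eqP ->|/existsP [i /eqP ->]];
  first by rewrite eqxx.
move=> /orP [/eqP ->|/existsP [j /eqP ->]]; first by rewrite eqxx.
move=> _ _; rewrite !rmorphXn => /eqP; rewrite (eq_prim_root_expr rho_prim).
by rewrite !modn_small // => /eqP ->.
Qed.

Lemma teich_onto : (#|F| <= 2 ^ m)%N ->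
  forall x : F, exists X, X \in teich (2 ^ m) beta /\ red X = x.
Proof.
move=> hF x.
pose G (o : option 'I_(2 ^ m).-1) : F := if o is Some i then red beta ^+ i else 0.
have Ginj : injective G.
  move=> [i|] [j|] //= => [/eqP|/eqP|/eqP].
  - by rewrite (eq_prim_root_expr rho_prim) !modn_small // => /eqP/val_inj ->.
  - by rewrite expf_eq0 (negbTE rho_neq0) andbF.
  - by rewrite eq_sym expf_eq0 (negbTE rho_neq0) andbF.
have : [set G o | o in [set: option 'I_(2 ^ m).-1]] == [set: F].
  rewrite eqEcard subsetT /= card_imset // cardsT cardsT card_option card_ord.
  by rewrite prednK // q_gt0.
move/eqP => himg; have : x \in [set: F] by rewrite inE.
rewrite -himg => /imsetP [[i|] _ ->].
- by exists (beta ^+ i); rewrite rmorphXn teichP; split=> //; apply/orP; right; apply/existsP; exists i.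
- by exists 0; rewrite rmorph0 teichP eqxx.
Qed.
End Teich.

Unset Implicit Arguments.
Set Strict Implicit.

Theorem lemmaB8
  (m : nat) (hm : odd m)
  (f : {poly 'Z_4}) (hfmonic : f \is monic) (hfsize : size f = m.+1)
  (hfirr : irreducible_poly (map_poly z4_to_f2 f))
  (R : finComNzRingType)
  (phi : {rmorphism {poly 'Z_4} -> R})
  (phi_surj : forall X : R, exists p, phi p = X)
  (phi_ker : forall p, phi p = 0 <-> exists g, p = g * f)
  (F : finFieldType)
  (red : {rmorphism R -> F})
  (red_surj : forall x : F, exists X, red X = x)
  (red_ker : forall X, red X = 0 <-> exists Y, X = Y *+ 2)
  (beta : R) (hbeta : (2 ^ m).-1.-primitive_root beta)
  (A B : R) (hA : A \in teich (2 ^ m) beta) (hB : B \in teich (2 ^ m) beta)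
  (hB0 : B != 0) (d : F) :
  let N := #|[set t : R * R * R |
               [&& t.1.1 \in teich (2 ^ m) beta,
                   t.1.2 \in teich (2 ^ m) beta,
                   t.2 \in teich (2 ^ m) beta,
                   t.1.1 + t.1.2 + t.2 == - A + B *+ 2 &
                   red t.1.1 ^+ 3 + red t.1.2 ^+ 3 + red t.2 ^+ 3
                     == red A ^+ 3 + red B ^+ 3 * d]]| in
  (d = 0 -> N = 3%N) /\
  (d \in Mset F 0 :|: Mset F 1 -> N = 0%N) /\
  (d \in Mset F 3 -> N = 6%N).
Proof.
move=> N.
have m_gt0 : (0 < m)%N by move: hm; case: (m).
have four : (4%:R : R) = 0.
  by rewrite -(rmorph_nat phi) -polyC_natr four_Z4 polyC0 rmorph0.
have inj2 := inj2_lemma hfirr phi_surj phi_ker red_ker.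
have two := two_F red_ker.
have hF := card_F_le hfmonic hfsize phi_surj phi_ker red_surj red_ker.
set a := red A; set b := red B.
have hb : b != 0 := teich_red_neq0 m_gt0 red_ker four hbeta hB hB0.
have cond : forall X Y Z, X \in teich (2 ^ m) beta -> Y \in teich (2 ^ m) beta ->
    Z \in teich (2 ^ m) beta ->
    (X + Y + Z == - A + B *+ 2) =
    (red X + red Y + red Z == a) &&
    (red X * red Y + red Y * red Z + red Z * red X == a ^+ 2 + b ^+ 2).
  move=> X Y Z hX hY hZ.
  pose s (W : R) := W ^+ (2 ^ m.-1)%N.
  have hs : forall W, W \in teich (2 ^ m) beta -> red W = red (s W) ^+ 2.
    by move=> W hW; rewrite -rmorphXn (teich_sqrt m_gt0 hbeta hW).
  have := eq_sum red_ker four inj2 (s X) (s Y) (s Z) (s A) B.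
  rewrite (teich_sqrt m_gt0 hbeta hX) (teich_sqrt m_gt0 hbeta hY) (teich_sqrt m_gt0 hbeta hZ) (teich_sqrt m_gt0 hbeta hA) => ->.
  by rewrite (hs X) // (hs Y) // (hs Z) // /a (hs A) // c2_cond.
have HN : N = #|Sol a b d|.
  rewrite /N.
  pose red3 (t : R * R * R) := (red t.1.1, red t.1.2, red t.2).
  rewrite -(card_in_imset (f := red3)).
    congr #|pred_of_set _|.
    apply/setP => -[[x y] z]; apply/imsetP/idP.
    - case=> -[[X Y] Z]; rewrite inE /= => /and5P [hX hY hZ hs hc] [-> -> ->].
      move: hs; rewrite cond // => /andP [h1 h2].
      by rewrite inE /= h1 h2 hc.
    - have [X [hX <-]] := teich_onto m_gt0 red_ker four hbeta hF x.
      have [Y [hY <-]] := teich_onto m_gt0 red_ker four hbeta hF y.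
      have [Z [hZ <-]] := teich_onto m_gt0 red_ker four hbeta hF z.
      rewrite inE /= => /and3P [h1 h2 h3].
      exists ((X, Y), Z) => //.
      by rewrite inE /= hX hY hZ cond // h1 h2 h3.
  move=> [[X Y] Z] [[X' Y'] Z']; rewrite !inE /=.
  move=> /and5P [hX hY hZ _ _] /and5P [hX' hY' hZ' _ _] [e1 e2 e3].
  by rewrite (teich_inj m_gt0 red_ker four hbeta hX hX' e1)
    (teich_inj m_gt0 red_ker four hbeta hY hY' e2)
    (teich_inj m_gt0 red_ker four hbeta hZ hZ' e3).
rewrite HN sol_count //.
split; first by move=> ->; exact: up0.
split.
  by rewrite inE => /orP [] ; rewrite inE => /andP [hd /eqP hc]; rewrite upN // hc.
by rewrite inE => /andP [hd /eqP hc]; rewrite upN // hc.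
Qed.
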